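(* Let $n\ge2$, $\alpha,\beta>0$, $a=1/\alpha$, $b=1/\beta$, and let $1\le j_1<\dots<j_r\le n-1$. For $1\le j\le n-1$ let $\alpha_j$ be the event that box $(n-j,j)$ (on the second main diagonal) contains $\alpha$. If $j_k\le j_{k+1}-2$ for all $k=1,\dots,r-1$, then \[\mathbb{P}_{n,\alpha,\beta}(\alpha_{j_1},\dots,\alpha_{j_r})=\prod_{k=1}^{r}\frac{b+j_{r-k+1}-2r+2k-1}{(n+a+b-2r+2k-1)(n+a+b-2r+2k-2)}.\] Otherwise, $\mathbb{P}_{n,\alpha,\beta}(\alpha_{j_1},\dots,\alpha_{j_r})=0$.
   Context: A staircase tableau of size $n$ has boxes $(i,j)$ with $i,j\ge1$ and $i+j\le n+1$, rows numbered from the top and columns from the left. An $\alpha/\beta$-staircase tableau of size $n$ is a filling in which each box is empty or contains $\alpha$ or $\beta$, such that: all boxes in the same column and above an $\alpha$ are empty; all boxes in the same row and to the left of a $\beta$ are empty; every main-diagonal box (with $i+j=n+1$) contains a symbol. $\overline{\mathcal{S}}_n$ is the set of these. The weight is $wt(S)=\alpha^{N_\alpha}\beta^{N_\beta}$ ($N_\alpha,N_\beta$ the numbers of $\alpha$'s, $\beta$'s), and for $\alpha,\beta>0$, $\mathbb{P}_{n,\alpha,\beta}(S)=wt(S)/Z_n(\alpha,\beta)$ with $Z_n(\alpha,\beta)=\sum_{T\in\overline{\mathcal{S}}_n}wt(T)$. The second main diagonal consists of the boxes $(n-j,j)$, $1\le j\le n-1$. $\mathbb{P}_{n,\alpha,\beta}(E_1,\dots,E_r)$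 denotes the probability of the intersection of the events. *)

(* Defs.v *)
From mathcomp Require Import all_boot all_order all_algebra.
Set Implicit Arguments. Unset Strict Implicit. Unset Printing Implicit Defensive.
Import Order.TTheory GRing.Theory Num.Theory.
Local Open Scope ring_scope.

(* Boxes are indexed 0-based: the paper's box (i,j) (1-based) is (i-1, j-1).
   A filling of a box: None = empty, Some true = alpha, Some false = beta. *)
Definition filling (n : nat) := {ffun 'I_n * 'I_n -> option bool}.

Definition in_stair (n : nat) (c : 'I_n * 'I_n) : bool := (c.1 + c.2 <= n.-1)%N.
Definition on_diag (n : nat) (c : 'I_n * 'I_n) : bool := (c.1 + c.2 == n.-1)%N.

Definition is_stair_tableau (n : nat) (S : filling n) : bool :=
  [forall c : 'I_n * 'I_n,
     [&& (~~ in_stair c) ==> (S c == None),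
         on_diag c ==> (S c != None),
         (S c == Some true) ==>
            [forall i : 'I_n, (i < c.1)%N ==> (S (i, c.2) == None)] &
         (S c == Some false) ==>
            [forall j : 'I_n, (j < c.2)%N ==> (S (c.1, j) == None)]]].

Definition N_alpha n (S : filling n) : nat := #|[set c | S c == Some true]|.
Definition N_beta n (S : filling n) : nat := #|[set c | S c == Some false]|.

Definition wt (R : nzRingType) (al be : R) n (S : filling n) : R :=
  al ^+ N_alpha S * be ^+ N_beta S.

Definition Zn (R : nzRingType) (al be : R) n : R :=
  \sum_(S : filling n | is_stair_tableau S) wt al be S.

Definition Prob (R : fieldType) n (al be : R) (E : filling n -> bool) : R :=
  (\sum_(S : filling n | is_stair_tableau S && E S) wt al be S) / Zn al be n.

Definition alpha_ev n (j : nat) (S : filling n) : bool :=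
  [exists c : 'I_n * 'I_n,
              [&& (c.1 == n - j - 1 :> nat)%N, (c.2 == j - 1 :> nat)%N
                & S c == Some true]].

Definition alpha_evs n (js : seq nat) (S : filling n) : bool :=
  all (fun j => alpha_ev j S) js.

Arguments Prob {R} n al be E.
Arguments alpha_evs : clear implicits.
Arguments alpha_ev : clear implicits.

(* Main.v *)
Require Import Defs.
From mathcomp Require Import all_boot all_order all_algebra.
From mathcomp Require Import ring lra zify.
Set Implicit Arguments. Unset Strict Implicit. Unset Printing Implicit Defensive.
Import Order.TTheory GRing.Theory Num.Theory.
Local Open Scope ring_scope.
Lemma sum_opt (R : nzRingType) (F : option bool -> R) : \sum_(a : option bool) F a = F None + (F (Some true) + F (Some false)).
Proof. rewrite (bigD1 None) //= (bigD1 (Some true)) //= (bigD1 (Some false)) //= big1 ?addr0 //.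
by case=> [[]|]. Qed.

Definition ext (A : finType) k (r : {ffun 'I_k -> A}) (a : A) : {ffun 'I_k.+1 -> A} :=
  [ffun j => if unlift ord_max j is Some j' then r j' else a].

Lemma ext_max (A : finType) k (r : {ffun 'I_k -> A}) a : ext r a ord_max = a.
Proof. by rewrite ffunE unlift_none. Qed.
Lemma ext_lift (A : finType) k (r : {ffun 'I_k -> A}) a j : ext r a (lift ord_max j) = r j.
Proof. by rewrite ffunE liftK. Qed.

Lemma peel (R : nzRingType) (A : finType) k (F : {ffun 'I_k.+1 -> A} -> R) :
  \sum_f F f = \sum_(r : {ffun 'I_k -> A}) \sum_(a : A) F (ext r a).
Proof.
rewrite pair_bigA /=.
rewrite (reindex (fun p : {ffun 'I_k -> A} * A => ext p.1 p.2)) //.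
apply: onW_bij.
exists (fun f : {ffun 'I_k.+1 -> A} => ([ffun j => f (lift ord_max j)], f ord_max)).
  case=> r a /=; congr pair; last by rewrite ext_max.
  by apply/ffunP=> j; rewrite ffunE ext_lift.
move=> f /=; apply/ffunP=> j; rewrite ffunE.
by case: unliftP => [j'|] ->; rewrite ?ffunE.
Qed.

Lemma bumpk k (j : 'I_k) : bump k j = j.
Proof. by rewrite /bump leqNgt ltn_ord. Qed.

Lemma widen_lift k (i : 'I_k) : widen_ord (leqnSn k) i = lift ord_max i.
Proof. by apply: val_inj; rewrite /= /bump leqNgt ltn_ord. Qed.

Lemma prod_recr (R : nzRingType) k (F : 'I_k.+1 -> R) :
  \prod_(i < k.+1) F i = (\prod_(i < k) F (lift ord_max i)) * F ord_max.
Proof. by rewrite big_ord_recr; under eq_bigr do rewrite widen_lift. Qed.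


Definition rowfree k (free : 'I_k -> bool) (row : {ffun 'I_k -> option bool}) : bool :=
  [forall j, (row j != None) ==> free j] &&
  [forall j, (row j == Some false) ==> [forall j' : 'I_k, (j' < j)%N ==> (row j' == None)]].

Definition nonerow k : {ffun 'I_k -> option bool} := [ffun => None].

Lemma oNT : (None == Some true :> option bool) = false. Proof. by []. Qed.
Lemma oNF : (None == Some false :> option bool) = false. Proof. by []. Qed.
Lemma oTN : (Some true == None :> option bool) = false. Proof. by []. Qed.
Lemma oFN : (Some false == None :> option bool) = false. Proof. by []. Qed.
Lemma oTF : (Some true == Some false :> option bool) = false. Proof. by []. Qed.
Lemma oFT : (Some false == Some true :> option bool) = false. Proof. by []. Qed.
Definition oE := (oNT, oNF, oTN, oFN, oTF, oFT, eqxx, andbT, andbF, orbT, orbF).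

Definition glue m (S' : filling m) (row : {ffun 'I_m.+1 -> option bool}) : filling m.+1 :=
  [ffun c : 'I_m.+1 * 'I_m.+1 =>
     match unlift ord0 c.1 with
     | None => row c.2
     | Some i => match unlift ord_max c.2 with Some j => S' (i, j) | None => None end
     end].

Lemma bump0S n : bump 0 n = n.+1.
Proof. by rewrite /bump leq0n add1n. Qed.

Section Glue.
Variable m : nat.
Variable S' : filling m.
Variable row : {ffun 'I_m.+1 -> option bool}.

Lemma glue_0 j : glue S' row (ord0, j) = row j.
Proof. by rewrite ffunE /= unlift_none. Qed.
Lemma glue_ll i j : glue S' row (lift ord0 i, lift ord_max j) = S' (i, j).
Proof. by rewrite ffunE /= !liftK. Qed.
Lemma glue_lm i : glue S' row (lift ord0 i, ord_max) = None.
Proof. by rewrite ffunE /= liftK unlift_none. Qed.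

End Glue.

Lemma in_stair_ll m (i j : 'I_m) : in_stair (lift ord0 i, lift ord_max j) = in_stair (i, j).
Proof.
rewrite /in_stair /= bumpk /bump leq0n add1n; have := ltn_ord i.
by move=> hi; apply/idP/idP; lia.
Qed.
Lemma on_diag_ll m (i j : 'I_m) : on_diag (lift ord0 i, lift ord_max j) = on_diag (i, j).
Proof.
rewrite /on_diag /= bumpk /bump leq0n add1n; have := ltn_ord i.
by move=> hi; apply/eqP/eqP; lia.
Qed.
Lemma on_diag_lm m (i : 'I_m) : on_diag (lift ord0 i, ord_max) = false.
Proof. rewrite /on_diag /= /bump leq0n add1n; apply/negbTE; lia. Qed.
Lemma on_diag_0 m (j : 'I_m.+1) : on_diag (ord0, j) = (j == ord_max).
Proof. by rewrite /on_diag /= add0n. Qed.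
Lemma in_stair_0 m (j : 'I_m.+1) : in_stair (ord0, j) = true.
Proof. by rewrite /in_stair /= add0n -ltnS ltn_ord. Qed.

Definition colA n (S : filling n) (j : 'I_n) : bool := [exists i, S (i, j) == Some true].
Definition freeF m (S' : filling m) : 'I_m.+1 -> bool :=
  fun j => if unlift ord_max j is Some j' then ~~ colA S' j' else true.
Definition rowok m (S' : filling m) (row : {ffun 'I_m.+1 -> option bool}) :=
  (row ord_max != None) && rowfree (freeF S') row.

Lemma freeF_lift m (S' : filling m) j : freeF S' (lift ord_max j) = ~~ colA S' j.
Proof. by rewrite /freeF liftK. Qed.
Lemma freeF_max m (S' : filling m) : freeF S' ord_max = true.
Proof. by rewrite /freeF unlift_none. Qed.

Lemma valid_glue m (S' : filling m) row :
  is_stair_tableau (glue S' row) = is_stair_tableau S' && rowok S' row.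
Proof.
apply/idP/idP.
- move=> /forallP H; apply/andP; split.
    apply/forallP=> -[i j].
    have /and4P[h1 h2 h3 h4] := H (lift ord0 i, lift ord_max j).
    move: h1 h2 h3 h4; rewrite /= glue_ll in_stair_ll on_diag_ll => h1 h2 h3 h4.
    apply/and4P; split => //.
      apply/implyP=> ha; apply/forallP=> i0; apply/implyP=> hi0.
      move: h3; rewrite ha /= => /forallP /(_ (lift ord0 i0)).
      by rewrite glue_ll ?lift0 ?bump0S ltnS hi0.
    apply/implyP=> hb; apply/forallP=> j0; apply/implyP=> hj0.
    move: h4; rewrite hb /= => /forallP /(_ (lift ord_max j0)).
    by rewrite glue_ll ?lift_max ?bumpk hj0.
  apply/andP; split.
    have /and4P[_ h2 _ _] := H (ord0, ord_max).
    by move: h2; rewrite /= glue_0 on_diag_0 eqxx.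
  apply/andP; split; apply/forallP=> j.
    case: (unliftP ord_max j) => [j0|] ->; last by rewrite freeF_max implybT.
    rewrite freeF_lift; apply/implyP=> hne; apply/negP=> /existsP [i hi].
    have /and4P[_ _ h3 _] := H (lift ord0 i, lift ord_max j0).
    move: h3; rewrite /= glue_ll hi /= => /forallP /(_ ord0).
    by rewrite glue_0 ?lift0 ?bump0S /= (negbTE hne).
  have /and4P[_ _ _ h4] := H (ord0, j).
  move: h4; rewrite /= glue_0 => h4; apply/implyP=> hb; apply/forallP=> j'.
  move: h4; rewrite hb /= => /forallP /(_ j'); by rewrite glue_0.
- case/andP=> /forallP HS /andP [hrow /andP [/forallP R1 /forallP R2]].
  apply/forallP=> -[c1 c2].
  case: (unliftP ord0 c1) => [i|] ->.
    case: (unliftP ord_max c2) => [j|] ->; last first.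
      by rewrite /= glue_lm on_diag_lm eqxx implybT.
    have /and4P[h1 h2 h3 h4] := HS (i, j).
    rewrite /= glue_ll in_stair_ll on_diag_ll; apply/and4P; split => //.
      apply/implyP=> ha; apply/forallP=> i0; apply/implyP.
      case: (unliftP ord0 i0) => [i1|] -> hlt.
        rewrite glue_ll; move: h3; rewrite ha /= => /forallP /(_ i1).
        by move: hlt; rewrite ?lift0 ?bump0S ltnS => ->.
      rewrite glue_0; have := R1 (lift ord_max j); rewrite freeF_lift.
      have -> : colA S' j by apply/existsP; exists i.
      by rewrite implybF negbK.
    apply/implyP=> hb; apply/forallP=> j0; apply/implyP.
    case: (unliftP ord_max j0) => [j1|] -> hlt.
      rewrite glue_ll; move: h4; rewrite hb /= => /forallP /(_ j1).
      by move: hlt; rewrite ?lift_max ?bumpk => ->.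
    by move: hlt; rewrite /= ?lift_max ?bumpk ltnNge (ltnW (ltn_ord j)).
  rewrite /= glue_0 in_stair_0 on_diag_0; apply/and4P; split => //.
  - by apply/implyP=> /eqP ->.
  - by apply/implyP=> _; apply/forallP=> i0.
  - apply/implyP=> hb; apply/forallP=> j'; rewrite glue_0.
    by have := R2 c2; rewrite hb /= => /forallP /(_ j').
Qed.

Definition splitT m (S : filling m.+1) : filling m * {ffun 'I_m.+1 -> option bool} :=
  ([ffun p : 'I_m * 'I_m => S (lift ord0 p.1, lift ord_max p.2)], [ffun j => S (ord0, j)]).

Lemma split_glue m (p : filling m * {ffun 'I_m.+1 -> option bool}) :
  splitT (glue p.1 p.2) = p.
Proof.
case: p => S' row; rewrite /splitT; congr pair; apply/ffunP => c; rewrite ffunE.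
  by case: c => i j; rewrite glue_ll.
by rewrite glue_0.
Qed.

Lemma valid_lm m (S : filling m.+1) i : is_stair_tableau S -> S (lift ord0 i, ord_max) = None.
Proof.
move=> /forallP /(_ (lift ord0 i, ord_max)) /and4P [h1 _ _ _]; apply/eqP; move: h1.
rewrite /in_stair /= bump0S.
have -> : (i.+1 + m <= m)%N = false by apply/negbTE; lia.
by [].
Qed.

Lemma glue_split m (S : filling m.+1) : is_stair_tableau S -> glue (splitT S).1 (splitT S).2 = S.
Proof.
move=> hS; apply/ffunP=> -[c1 c2]; rewrite ffunE /=.
case: (unliftP ord0 c1) => [i|] ->; last by rewrite ffunE.
case: (unliftP ord_max c2) => [j|] ->; first by rewrite ffunE.
by rewrite valid_lm.
Qed.

Lemma decomp (T : nzRingType) m (P : pred (filling m.+1)) (F : filling m.+1 -> T) :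
  \sum_(S | is_stair_tableau S && P S) F S =
  \sum_(S' | is_stair_tableau S') \sum_(row | rowok S' row && P (glue S' row)) F (glue S' row).
Proof.
rewrite (reindex_onto (fun p => glue p.1 p.2) (@splitT m)); last first.
  by move=> S /andP [hS _]; apply: glue_split.
rewrite pair_big_dep /=; apply: eq_bigl => -[S' row] /=.
by rewrite (split_glue (S', row)) eqxx andbT valid_glue andbA.
Qed.

Lemma alpha_ev_glue m j (S' : filling m) row : (0 < j)%N -> (j < m)%N ->
  alpha_ev m.+1 j (glue S' row) = alpha_ev m j S'.
Proof.
move=> hj0 hjm; apply/existsP/existsP.
  case=> -[c1 c2] /and3P [h1 h2 h3].
  move: h1 h2 h3; case: (unliftP ord0 c1) => [i|] -> /=; last by move/eqP; lia.
  case: (unliftP ord_max c2) => [j0|] ->; last by rewrite /= => _ /eqP; lia.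
  rewrite glue_ll ?lift0 ?bump0S ?lift_max ?bumpk => /eqP h1 /eqP h2 h3.
  exists (i, j0); rewrite /= h3 andbT; apply/andP; split; apply/eqP; lia.
case=> -[i j0] /and3P [h1 h2 h3]; exists (lift ord0 i, lift ord_max j0).
move: h1 h2; rewrite /= glue_ll h3 andbT ?bump0S ?bumpk => /eqP h1 /eqP h2.
apply/andP; split; apply/eqP; lia.
Qed.

Lemma alpha_ev_top k (S' : filling k.+1) row :
  alpha_ev k.+2 k.+1 (glue S' row) = (row (lift ord_max ord_max) == Some true).
Proof.
apply/existsP/idP.
  case=> -[c1 c2] /and3P [h1 h2 h3].
  move: h1 h2 h3; case: (unliftP ord0 c1) => [i|] -> /=.
    by rewrite bump0S => /eqP; lia.
  move=> _ /eqP h2; rewrite glue_0.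
  have -> : c2 = lift ord_max ord_max by apply: ord_inj; rewrite lift_max /=; lia.
  by [].
move=> h; exists (ord0, lift ord_max ord_max); rewrite /= glue_0 h andbT.
rewrite /bump; apply/andP; split; apply/eqP; lia.
Qed.

Lemma alpha_evs_glue m js (S' : filling m) row :
  all (fun j => (0 < j < m)%N) js ->
  alpha_evs m.+1 js (glue S' row) = alpha_evs m js S'.
Proof.
elim: js => //= j js IH /andP [/andP [h0 h1] hall].
by rewrite alpha_ev_glue // IH.
Qed.

Lemma alpha_evs_rcons n js j (S : filling n) :
  alpha_evs n (rcons js j) S = alpha_evs n js S && alpha_ev n j S.
Proof. by rewrite /alpha_evs all_rcons andbC. Qed.

Definition sep2 (a b : nat) : bool := (a.+1 < b)%N.

Lemma pairwise_rcons2 s x : pairwise sep2 (rcons s x) = pairwise sep2 s && all (sep2^~ x) s.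
Proof. by rewrite -cats1 pairwise_cat allrel1r /= andbT andbC. Qed.

Lemma sep_bound s n : pairwise sep2 s -> all (fun j => (0 < j < n)%N) s -> (2 * size s <= n)%N.
Proof.
elim/last_ind: s n => [|s x IH] n //.
rewrite pairwise_rcons2 all_rcons size_rcons => /andP [hp ha] /andP [/andP [hx0 hxn] hall].
have : (2 * size s <= x.-1)%N.
  apply: IH => //; apply/allP => y hy.
  have /andP [hy0 _] := allP hall y hy.
  have := allP ha y hy; rewrite /sep2 hy0 /=; lia.
lia.
Qed.
Section Weights.
Variable R : comNzRingType.
Variables al be : R.

Definition w (o : option bool) : R :=
  match o with Some true => al | Some false => be | None => 1 end.


Definition rw k (row : {ffun 'I_k -> option bool}) := \prod_j w (row j).
Definition xf k (free : 'I_k -> bool) (y : R) (row : {ffun 'I_k -> option bool}) :=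
  \prod_j (if (row j == Some true) || ~~ free j then 1 else y).
Definition Tsum k (free : 'I_k -> bool) (y : R) :=
  \sum_(row | rowfree free row) rw row * xf free y row.
Definition Yp k (free : 'I_k -> bool) (c : R) := \prod_(j < k) (if free j then c else 1).


Lemma rowfree_ext k (free : 'I_k.+1 -> bool) r a :
  rowfree free (ext r a) =
  [&& rowfree (fun j => free (lift ord_max j)) r, (a != None) ==> free ord_max &
      (a == Some false) ==> (r == nonerow k)].
Proof.
apply/idP/idP.
- case/andP=> /forallP H1 /forallP H2; apply/and3P; split.
  + apply/andP; split; apply/forallP=> j.
      by have := H1 (lift ord_max j); rewrite ext_lift.
    apply/implyP=> hj; apply/forallP=> j'; apply/implyP=> hjj'.
    have := H2 (lift ord_max j); rewrite ext_lift hj /= => /forallP /(_ (lift ord_max j')).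
    by rewrite ext_lift ?lift_max ?bumpk hjj'.
  + by have := H1 ord_max; rewrite ext_max.
  + apply/implyP=> ha; apply/eqP/ffunP=> j; rewrite ffunE.
    have := H2 ord_max; rewrite ext_max ha /= => /forallP /(_ (lift ord_max j)).
    by rewrite ext_lift ?lift_max ?bumpk ltn_ord => /eqP.
- case/and3P=> /andP [/forallP H1 /forallP H2] Ha Hb; apply/andP; split; apply/forallP=> j.
  + case: (unliftP ord_max j) => [j0|] ->; first by rewrite ext_lift H1.
    by rewrite ext_max.
  + case: (unliftP ord_max j) => [j0|] ->.
    * rewrite ext_lift; apply/implyP=> hj; apply/forallP=> j'; apply/implyP=> hjj'.
      case: (unliftP ord_max j') hjj' => [j1|] ->; rewrite ?lift_max ?bumpk => hj1.
        by rewrite ext_lift; have := H2 j0; rewrite hj /= => /forallP /(_ j1); rewrite hj1.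
      by move: hj1; rewrite /= ltnNge (ltnW (ltn_ord j0)).
    * rewrite ext_max; apply/implyP=> ha; apply/forallP=> j'; apply/implyP=> hjj'.
      move: Hb; rewrite ha /= => /eqP Hr.
      case: (unliftP ord_max j') hjj' => [j1|] ->; rewrite ?ext_lift ?Hr ?ffunE //.
      by rewrite ltnn.
Qed.

Lemma rw_ext k (r : {ffun 'I_k -> option bool}) a : rw (ext r a) = rw r * w a :> R.
Proof. rewrite /rw prod_recr ext_max; congr (_ * _); by apply: eq_bigr => i _; rewrite ext_lift. Qed.

Lemma xf_ext k (free : 'I_k.+1 -> bool) y (r : {ffun 'I_k -> option bool}) a :
  xf free y (ext r a) = xf (fun j => free (lift ord_max j)) y r *
     (if (a == Some true) || ~~ free ord_max then 1 else y).
Proof. by rewrite /xf prod_recr ext_max; congr (_ * _); apply: eq_bigr => i _; rewrite ext_lift. Qed.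

Lemma Yp_rec k (free : 'I_k.+1 -> bool) c :
  Yp free c = Yp (fun j => free (lift ord_max j)) c * (if free ord_max then c else 1).
Proof. by rewrite /Yp prod_recr. Qed.

Lemma rw_none k : rw (nonerow k) = 1.
Proof. by rewrite /rw big1 // => j _; rewrite ffunE. Qed.
Lemma xf_none k free y : xf free y (nonerow k) = Yp free y.
Proof. by rewrite /xf /Yp; apply: eq_bigr=> j _; rewrite ffunE /=; case: (free j). Qed.
Lemma rowfree_none k (free : 'I_k -> bool) : rowfree free (nonerow k).
Proof. by apply/andP; split; apply/forallP=> j; rewrite ffunE. Qed.


Lemma sum_ord0_ffun (F : {ffun 'I_0 -> option bool} -> R) : \sum_f F f = F (nonerow 0).
Proof.
rewrite (big_pred1 (nonerow 0)) // => f /=; symmetry; apply/eqP/ffunP; by case.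
Qed.

Lemma T_closed k (free : 'I_k -> bool) y :
  al * Tsum free y = (al + be*y) * Yp free (al+y) - be*y * Yp free y.
Proof.
elim: k free => [|k IH] free.
  rewrite /Tsum big_mkcond sum_ord0_ffun rowfree_none rw_none xf_none /Yp !big_ord0.
  by rewrite mul1r !mulr1 addrK.
set free' := fun j => free (lift ord_max j).
rewrite /Tsum big_mkcond peel.
under eq_bigr => r _ do rewrite sum_opt !rowfree_ext !rw_ext !xf_ext /=.
rewrite !Yp_rec -/free'; have IH' := IH free'.
have H0 := rowfree_none free'.
case hb: (free ord_max) => /=.
  transitivity (al * (\sum_r ((if rowfree free' r then rw r * xf free' y r else 0) * (y + al)
     + (if r == nonerow k then be * y * Yp free' y else 0)))).
    congr (_ * _); apply: eq_bigr => r _.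
    case: (eqVneq r (nonerow k)) => [->|ne].
      by rewrite H0 rw_none xf_none /=; ring.
    by rewrite ?(negbTE ne) /= !andbT andbF; case: (rowfree free' r); rewrite /=; ring.
  rewrite big_split /= -big_distrl -big_mkcond -/(Tsum free' y) -big_mkcond /= big_pred1_eq.
  rewrite mulrDr mulrA mulrC mulrA IH'; ring.
transitivity (al * (\sum_r (if rowfree free' r then rw r * xf free' y r else 0))).
  congr (_ * _); apply: eq_bigr => r _.
  by rewrite andbF /= andbT; case: (rowfree free' r); rewrite /=; ring.
by rewrite -big_mkcond -/(Tsum free' y) IH' !mulr1.
Qed.

Definition wtp n (S : filling n) := \prod_c w (S c).
Definition Xf n (y : R) (S : filling n) := \prod_j (if colA S j then 1 else y).
Definition Gen n (P : pred (filling n)) (y : R) :=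
  \sum_(S | is_stair_tableau S && P S) wtp S * Xf y S.

Lemma wtp2 n (S : filling n) : wtp S = \prod_i \prod_j w (S (i, j)).
Proof. by rewrite /wtp pair_bigA; apply: eq_bigr => -[i j]. Qed.

Lemma wtp_glue m (S' : filling m) row : wtp (glue S' row) = wtp S' * rw row.
Proof.
rewrite !wtp2 /rw big_ord_recl mulrC; congr (_ * _); last first.
  apply: eq_bigr => j _; by rewrite glue_0.
apply: eq_bigr => i _.
by rewrite prod_recr glue_lm mulr1; apply: eq_bigr => j _; rewrite glue_ll.
Qed.

Lemma colA_glue_lift m (S' : filling m) row j :
  colA (glue S' row) (lift ord_max j) = (row (lift ord_max j) == Some true) || colA S' j.
Proof.
apply/existsP/orP.
  case=> i; case: (unliftP ord0 i) => [i0|] ->; first by rewrite glue_ll=> h; right; apply/existsP; exists i0.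
  by rewrite glue_0; left.
case=> [h|/existsP [i h]]; first by exists ord0; rewrite glue_0.
by exists (lift ord0 i); rewrite glue_ll.
Qed.

Lemma colA_glue_max m (S' : filling m) row :
  colA (glue S' row) ord_max = (row ord_max == Some true).
Proof.
apply/existsP/idP.
  case=> i; case: (unliftP ord0 i) => [i0|] ->; first by rewrite glue_lm.
  by rewrite glue_0.
by move=> h; exists ord0; rewrite glue_0.
Qed.

Lemma Xf_glue m (S' : filling m) row y : Xf y (glue S' row) = xf (freeF S') y row.
Proof.
rewrite /Xf /xf !prod_recr colA_glue_max freeF_max orbF; congr (_ * _).
by apply: eq_bigr => j _; rewrite colA_glue_lift freeF_lift negbK.
Qed.

Lemma Yp_Xf m (S' : filling m) c : Yp (fun j => ~~ colA S' j) c = Xf c S'.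
Proof. by apply: eq_bigr => j _; case: (colA S' j). Qed.

Lemma RS m (S' : filling m) y :
  \sum_(row | rowok S' row) rw row * xf (freeF S') y row = (al + be * y) * Xf (al + y) S'.
Proof.
rewrite big_mkcond peel.
under eq_bigr => r _ do rewrite sum_opt /rowok !rowfree_ext !rw_ext !xf_ext !ext_max /=.
set f' := (fun j => freeF S' (lift ord_max j)).
have E : forall c, Yp f' c = Xf c S'.
  by move=> c; apply: eq_bigr => j _; rewrite /f' freeF_lift; case: (colA S' j).
rewrite freeF_max /=.
transitivity (\sum_r ((if rowfree f' r then rw r * xf f' y r else 0) * al
     + (if r == nonerow m then be * y * Yp f' y else 0))).
  apply: eq_bigr => r _.
  case: (eqVneq r (nonerow m)) => [->|ne].
    by rewrite rowfree_none rw_none xf_none /=; ring.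
  by rewrite ?(negbTE ne) /= !andbT !andbF; case: (rowfree _ r); rewrite /=; ring.
rewrite big_split /= -big_distrl -big_mkcond -/(Tsum _ y) -big_mkcond /= big_pred1_eq.
rewrite mulrC T_closed !E; ring.
Qed.

Lemma RSA_B k (f' : 'I_k.+1 -> bool) y :
  \sum_(r | rowfree f' r && (r ord_max == Some true)) rw r * xf f' y r =
  al * (if f' ord_max then Tsum (fun j => f' (lift ord_max j)) y else 0).
Proof.
rewrite big_mkcond peel.
under eq_bigr => r _ do rewrite sum_opt !rowfree_ext !rw_ext !xf_ext !ext_max /=.
case: (f' ord_max) => /=.
  rewrite /Tsum big_distrr [RHS]big_mkcond /=; apply: eq_bigr => r _.
  by rewrite !oE; case: (rowfree _ r); rewrite /=; ring.
by rewrite big1 ?mulr0 // => r _; rewrite !oE /= !addr0.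
Qed.

Lemma RSA k (S' : filling k.+1) y :
  \sum_(row | rowok S' row && (row (lift ord_max ord_max) == Some true)) rw row * xf (freeF S') y row
  = al * (al * (if freeF S' (lift ord_max ord_max) then
        Tsum (fun j => freeF S' (lift ord_max (lift ord_max j))) y else 0)).
Proof.
rewrite -(RSA_B (fun j => freeF S' (lift ord_max j))).
rewrite big_mkcond peel.
under eq_bigr => r _ do rewrite sum_opt /rowok !rowfree_ext !rw_ext !xf_ext !ext_max !ext_lift /=.
rewrite freeF_max /= big_distrr [RHS]big_mkcond /=; apply: eq_bigr => r _.
case: (eqVneq r (nonerow k.+1)) => [->|ne].
  by rewrite ffunE /= !oE /=; ring.
rewrite ?(negbTE ne) !oE /=.
by case: (_ && _); rewrite /=; ring.
Qed.

Lemma betarow_sum k (S'' : filling k) (G : {ffun 'I_k.+1 -> option bool} -> R) :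
  \sum_(row | rowok S'' row) (if row ord_max == Some true then 0 else G row) =
  G (ext (nonerow k) (Some false)).
Proof.
rewrite big_mkcond peel.
under eq_bigr => r _ do rewrite sum_opt /rowok !rowfree_ext !ext_max /=.
rewrite freeF_max /=.
rewrite (bigD1 (nonerow k)) //= rowfree_none !oE /= !add0r.
rewrite big1 ?addr0 // => r ne; rewrite (negbTE ne) !oE /=.
by case: (rowfree _ r); rewrite /= ?addr0.
Qed.

Lemma Gen_R1 m (P : pred (filling m.+1)) (P' : pred (filling m)) y :
  (forall S' row, P (glue S' row) = P' S') -> Gen P y = (al + be * y) * Gen P' (al + y).
Proof.
move=> HP; rewrite /Gen decomp big_distrr /= [LHS]big_mkcond [RHS]big_mkcond /=.
apply: eq_bigr => S' _.
case hv: (is_stair_tableau S') => //=.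
under eq_bigl => row do rewrite HP.
case: (P' S') => /=; last by rewrite big_pred0 ?mulr0 // => row; rewrite andbF.
under eq_bigl => row do rewrite andbT.
under eq_bigr => row _ do rewrite wtp_glue Xf_glue.
rewrite mulrCA -RS big_distrr /=; apply: eq_bigr => row _; ring.
Qed.

Lemma eq_rowfree k (f g : 'I_k -> bool) r : f =1 g -> rowfree f r = rowfree g r.
Proof.
move=> e; rewrite /rowfree; congr (_ && _); apply: eq_forallb => j; by rewrite e.
Qed.
Lemma eq_Tsum k (f g : 'I_k -> bool) y : f =1 g -> Tsum f y = Tsum g y.
Proof.
move=> e; rewrite /Tsum; apply: eq_big => r; first by apply: eq_rowfree.
move=> _; congr (_ * _); apply: eq_bigr => j _; by rewrite e.
Qed.


Definition Vf k (S' : filling k.+1) y :=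
  al * (al * (if freeF S' (lift ord_max ord_max) then
        Tsum (fun j => freeF S' (lift ord_max (lift ord_max j))) y else 0)).

Lemma Gen_R2a k (P : pred (filling k.+2)) (P' : pred (filling k.+1)) y :
  (forall S' row, P (glue S' row) = P' S' && (row (lift ord_max ord_max) == Some true)) ->
  Gen P y = \sum_(S' | is_stair_tableau S' && P' S') wtp S' * Vf S' y.
Proof.
move=> HP; rewrite /Gen decomp [LHS]big_mkcond [RHS]big_mkcond /=.
apply: eq_bigr => S' _.
case hv: (is_stair_tableau S') => //=.
under eq_bigl => row do rewrite HP.
case: (P' S') => /=; last by rewrite big_pred0 // => row; rewrite andbF.
under eq_bigr => row _ do rewrite wtp_glue Xf_glue.
rewrite /Vf -RSA big_distrr /=; apply: eq_bigr => row _; ring.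
Qed.

Lemma Gen_R2 k (P : pred (filling k.+2)) (P' : pred (filling k.+1)) (P'' : pred (filling k)) y :
  (forall S' row, P (glue S' row) = P' S' && (row (lift ord_max ord_max) == Some true)) ->
  (forall S'' row, P' (glue S'' row) = P'' S'') ->
  Gen P y = al * be * ((al + be * y) * Gen P'' (al + y) - be * y * Gen P'' y).
Proof.
move=> HP HP'; rewrite (Gen_R2a y HP) decomp /Gen.
rewrite !big_distrr /= -sumrB big_distrr /= [LHS]big_mkcond [RHS]big_mkcond /=.
apply: eq_bigr => S'' _.
case hv: (is_stair_tableau S'') => //=.
under eq_bigl => row do rewrite HP'.
case: (P'' S'') => /=; last by rewrite big_pred0 // => row; rewrite andbF.
under eq_bigl => row do rewrite andbT.
set G := fun row : {ffun 'I_k.+1 -> option bool} =>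
  wtp S'' * rw row * (al * (al * Tsum (fun j => ~~ colA (glue S'' row) (lift ord_max j)) y)).
transitivity (\sum_(row | rowok S'' row) (if row ord_max == Some true then 0 else G row)).
  apply: eq_bigr => row _; rewrite /Vf /G wtp_glue freeF_lift colA_glue_max.
  case: (row ord_max == Some true) => /=; first by rewrite !mulr0.
  congr (_ * (_ * (_ * _))); apply: eq_Tsum => j; by rewrite freeF_lift.
rewrite betarow_sum /G rw_ext rw_none mul1r.
have E : Tsum (fun j => ~~ colA (glue S'' (ext (nonerow k) (Some false))) (lift ord_max j)) y =
         Tsum (fun j => ~~ colA S'' j) y.
  apply: eq_Tsum => j; by rewrite colA_glue_lift ext_lift ffunE.
rewrite E; have := T_closed (fun j => ~~ colA S'' j) y.
have Y : forall c, Yp (fun j => ~~ colA S'' j) c = Xf c S''.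
  by move=> c; apply: eq_bigr => j _; case: (colA S'' j).
rewrite !Y => e; rewrite e /=; ring.
Qed.

Definition Ef k (x : R) := \prod_(i < k) (al + be * x + i%:R * (al * be)).
Definition Kf (js : seq nat) :=
  \prod_(i < size js) (al * al * be * (1 + ((nth 0%N js i)%:R - 2 * i%:R - 1) * be)).

Lemma Ef_shift k x : (al + be * x) * Ef k (al + x) = Ef k.+1 x.
Proof.
rewrite /Ef big_ord_recl /= mul0r addr0; congr (_ * _); apply: eq_bigr => i _.
rewrite bump0S -addn1 natrD; ring.
Qed.

Lemma Ef_diff t x : (al + be * x) * Ef t (al + x) - be * x * Ef t x = Ef t x * (al + t%:R * (al * be)).
Proof. rewrite Ef_shift /Ef big_ord_recr /=; ring. Qed.

Lemma Kf_rcons js j : Kf (rcons js j) = Kf js * (al * al * be * (1 + (j%:R - 2 * (size js)%:R - 1) * be)).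
Proof.
rewrite /Kf size_rcons big_ord_recr /= nth_rcons ltnn eqxx; congr (_ * _).
by apply: eq_bigr => i _; rewrite nth_rcons ltn_ord.
Qed.

Lemma Gen0 y : Gen (alpha_evs 0 [::]) y = 1.
Proof.
rewrite /Gen (big_pred1 [ffun => None]).
  by rewrite /wtp /Xf !big1 ?mulr1 // => -[[]].
move=> S /=; rewrite andbT; symmetry.
have -> : S == [ffun => None] by apply/eqP/ffunP => -[[]].
by symmetry; apply/forallP => -[[]].
Qed.

Lemma closed n js y : pairwise sep2 js -> all (fun j => (0 < j < n)%N) js ->
  Gen (alpha_evs n js) y = Kf js * Ef (n - 2 * size js) y.
Proof.
elim/ltn_ind: n js y => -[|m] IH js y hp ha.
  case: js hp ha => [_ _|j js _ /andP [/andP [h0 h1] _]]; last by lia.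
  by rewrite Gen0 /Kf /Ef !big_ord0 mulr1.
case/lastP: js hp ha => [|js j] hp ha.
  rewrite (@Gen_R1 m _ (alpha_evs m [::])) // IH // /Kf !big_ord0 !mul1r.
  by rewrite !muln0 !subn0 Ef_shift.
move: (hp) (ha); rewrite pairwise_rcons2 all_rcons => /andP [hp' hsep] /andP [/andP [hj0 hjm] ha'].
have hall' : all (fun i => (0 < i < j)%N) js.
  apply/allP => i hi; have /andP [-> _] := allP ha' i hi.
  by have := allP hsep i hi; rewrite /sep2 /=; lia.
case: (ltnP j m) => hjlt.
  have hall : all (fun i => (0 < i < m)%N) (rcons js j).
    rewrite all_rcons hj0 hjlt /=; apply/allP => i hi.
    by have /andP [-> h] := allP hall' i hi; lia.
  rewrite (@Gen_R1 m _ (alpha_evs m (rcons js j))); last by move=> S' row; rewrite alpha_evs_glue.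
  rewrite IH //; have := sep_bound hp hall => hb.
  rewrite mulrCA Ef_shift; congr (_ * Ef _ _); lia.
have ejm : j = m by lia.
subst j; case: m IH hjm hj0 ha ha' hall' hp hjlt hsep => [|k] IH hjm hj0 ha ha' hall' hp hjlt hsep; first by [].
have hallk : all (fun i => (0 < i < k)%N) js.
  apply/allP => i hi; have /andP [-> _] := allP ha' i hi.
  by have := allP hsep i hi; rewrite /sep2 /=; lia.
rewrite (@Gen_R2 k _ (alpha_evs k.+1 js) (alpha_evs k js)); first last.
- by move=> S'' row; rewrite alpha_evs_glue.
- by move=> S' row; rewrite alpha_evs_rcons alpha_evs_glue // alpha_ev_top.
rewrite !IH //; have := sep_bound hp' hallk => hb.
set t := (k - 2 * size js)%N.
transitivity (al * be * Kf js * ((al + be * y) * Ef t (al + y) - be * y * Ef t y)); first ring.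
rewrite Ef_diff Kf_rcons size_rcons.
have -> : (k.+2 - 2 * (size js).+1 = t)%N by rewrite /t; lia.
rewrite /t natrB // natrM; ring.
Qed.
End Weights.

Lemma factor_eq (R : realFieldType) (al be N K Rr J : R) : 0 < al -> 0 < be -> 2*K + 2 <= N ->
 al*al*be*(1 + (J - 2*K - 1)*be) / ((al + be*1 + (N - 2*K - 2)*(al*be)) * (al + be*1 + (N-2*K-1)*(al*be)))
 = (be^-1 + J - 2*Rr + 2*(Rr - K) - 1) / ((N + al^-1 + be^-1 - 2*Rr + 2*(Rr - K) - 1) * (N + al^-1 + be^-1 - 2*Rr + 2*(Rr - K) - 2)).
Proof.
move=> ha hb hN.
have hab : 0 < al * be by rewrite mulr_gt0.
have ia : 0 < al^-1 by rewrite invr_gt0.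
have ib : 0 < be^-1 by rewrite invr_gt0.
have h1 : 0 < N - 2*K - 2 + al^-1 + be^-1 by lra.
have h2 : 0 < N - 2*K - 1 + al^-1 + be^-1 by lra.
have e1 : al + be*1 + (N - 2*K - 2)*(al*be) = al*be*(N - 2*K - 2 + al^-1 + be^-1).
  by field; apply/andP; split; apply: lt0r_neq0.
have e2 : al + be*1 + (N - 2*K - 1)*(al*be) = al*be*(N - 2*K - 1 + al^-1 + be^-1).
  by field; apply/andP; split; apply: lt0r_neq0.
have e3 : 1 + (J - 2*K - 1)*be = be * (be^-1 + J - 2*K - 1).
  by field; apply: lt0r_neq0.
rewrite e1 e2 e3.
have -> : N + al^-1 + be^-1 - 2*Rr + 2*(Rr - K) - 1 = N - 2*K - 1 + al^-1 + be^-1 by ring.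
have -> : N + al^-1 + be^-1 - 2*Rr + 2*(Rr - K) - 2 = N - 2*K - 2 + al^-1 + be^-1 by ring.
have -> : be^-1 + J - 2*Rr + 2*(Rr - K) - 1 = be^-1 + J - 2*K - 1 by ring.
field.
by rewrite !lt0r_neq0 //; nra.
Qed.

Lemma EfD (R : comNzRingType) (al be : R) n r x : (2 * r <= n)%N ->
  Ef al be n x = Ef al be (n - 2 * r) x *
    \prod_(k < r) ((al + be * x + (n - 2 * k - 2)%:R * (al * be)) *
                   (al + be * x + (n - 2 * k - 1)%:R * (al * be))).
Proof.
elim: r => [|r IH] hr; first by rewrite muln0 subn0 big_ord0 mulr1.
rewrite IH; last by lia.
rewrite big_ord_recr /=.
set P := \prod_(i < r) _.
suff -> : Ef al be (n - 2 * r) x = Ef al be (n - 2 * r.+1) x *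
   ((al + be * x + (n - 2 * r - 2)%:R * (al * be)) * (al + be * x + (n - 2 * r - 1)%:R * (al * be))).
  by ring.
set m := (n - 2 * r.+1)%N.
have -> : (n - 2 * r - 2 = m)%N by rewrite /m; lia.
have -> : (n - 2 * r - 1 = m.+1)%N by rewrite /m; lia.
have -> : (n - 2 * r = m.+2)%N by rewrite /m; lia.
by rewrite /Ef !big_ord_recr /= -mulrA.
Qed.

Lemma wt_wtp (R : comNzRingType) (al be : R) n (S : filling n) : wt al be S = wtp al be S.
Proof.
rewrite /wt /wtp /N_alpha /N_beta.
transitivity (\prod_c ((if S c == Some true then al else 1) * (if S c == Some false then be else 1))).
  rewrite big_split /= -!big_mkcond /= !prodr_const !cardsE; congr (_ ^+ #|_| * _ ^+ #|_|).
apply: eq_bigr => c _; case: (S c) => [[]|] /=; rewrite ?oE; ring.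
Qed.

Lemma sum_Gen (R : comNzRingType) (al be : R) n (P : pred (filling n)) :
  \sum_(S | is_stair_tableau S && P S) wt al be S = Gen al be P 1.
Proof.
rewrite /Gen; apply: eq_bigr => S _.
by rewrite wt_wtp /Xf big1 ?mulr1 // => j _; case: (colA S j).
Qed.

Lemma Ef_gt0 (R : realFieldType) (al be : R) t : 0 < al -> 0 < be -> 0 < Ef al be t 1.
Proof.
move=> ha hb; rewrite /Ef; apply: prodr_gt0 => i _.
have : 0 <= i%:R :> R by apply: ler0n.
have : 0 < al * be by rewrite mulr_gt0.
move=> h1 h2; have : 0 <= i%:R * (al * be) by rewrite mulr_ge0 // ltW.
lra.
Qed.

Theorem theorem3p3 (R : realFieldType) (n : nat) (al be : R) (js : seq nat) :
  (2 <= n)%N -> 0 < al -> 0 < be ->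
  (0 < size js)%N -> sorted ltn js ->
  all (fun j => (1 <= j <= n - 1)%N) js ->
  let r := size js in
  let a := al^-1 in
  let b := be^-1 in
  if [forall k : 'I_r, (k.+1 < r)%N ==> (nth 0 js k + 2 <= nth 0 js k.+1)%N]
  then Prob n al be (alpha_evs n js) =
       \prod_(k < r)
         ((b + (nth 0 js (r - k.+1))%:R - 2 * r%:R + 2 * (k.+1)%:R - 1) /
          ((n%:R + a + b - 2 * r%:R + 2 * (k.+1)%:R - 1) *
           (n%:R + a + b - 2 * r%:R + 2 * (k.+1)%:R - 2)))
  else Prob n al be (alpha_evs n js) = 0.
Proof.
move=> hn hal hbe hr hsort hall r a b.
have den : Zn al be n = Gen al be (alpha_evs n [::]) 1.
  rewrite -sum_Gen /Zn; apply: eq_bigl => S; by rewrite andbT.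
rewrite /Prob sum_Gen den.
case: ifP => hsep; last first.
  move/negbT: hsep; rewrite negb_forall => /existsP [k].
  rewrite negb_imply => /andP [hk hlt].
  have hlt2 : (nth 0 js k < nth 0 js k.+1)%N by move/sortedP: hsort => /(_ 0%N k hk).
  have e : nth 0 js k.+1 = (nth 0 js k).+1.
    apply/eqP; rewrite eqn_leq hlt2 andbT; move: hlt; rewrite -ltnNge addn2 ltnS; done.
  set j := nth 0 js k.
  have hjm : j \in js by rewrite mem_nth // ltnW.
  have hjm1 : j.+1 \in js by rewrite -e mem_nth.
  have /andP [hj1 hj2] := allP hall _ hjm1.
  have /andP [hj0 _] := allP hall _ hjm.
  rewrite /Gen big_pred0 ?mul0r // => S.
  apply/negbTE/negP => /andP [/forallP hv /allP hev].
  have /existsP [c /and3P [c1 c2 c3]] := hev _ hjm.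
  have /existsP [c' /and3P [c1' c2' c3']] := hev _ hjm1.
  have /and4P [_ h2 h3 h4] := hv (c.1, c'.2).
  move: h2; rewrite /on_diag /=.
  have -> : (c.1 + c'.2 == n.-1)%N.
    move/eqP: c1 => ->; move/eqP: c2' => ->; apply/eqP; lia.
  rewrite /=; case E: (S (c.1, c'.2)) h3 h4 => [[]|] //= h3 h4 _.
    move: h3 => /forallP /(_ c'.1).
    have -> : (c'.1 < c.1)%N by move/eqP: c1 => ->; move/eqP: c1' => ->; lia.
    by rewrite -surjective_pairing (eqP c3').
  move: h4 => /forallP /(_ c.2).
  have -> : (c.2 < c'.2)%N by move/eqP: c2 => ->; move/eqP: c2' => ->; lia.
  by rewrite -surjective_pairing (eqP c3).
have hp : pairwise sep2 js.
  rewrite -sorted_pairwise; last by move=> x y z; rewrite /sep2; lia.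
  apply/(sortedP 0%N) => i hi.
  have hi' : (i < r)%N by rewrite /r; lia.
  move/forallP: hsep => /(_ (Ordinal hi')) /implyP /(_ hi) /=.
  by rewrite /sep2; lia.
have ha : all (fun j => (0 < j < n)%N) js.
  by apply/allP => j hj; have := allP hall j hj; lia.
have hb := sep_bound hp ha.
rewrite !closed //= muln0 subn0 [Kf _ _ [::]]/Kf big_ord0 mul1r (EfD al be 1 hb).
have hE : Ef al be (n - 2 * size js) 1 != 0 by apply: lt0r_neq0; apply: Ef_gt0.
rewrite invfM mulrA mulfK // /Kf -prodf_div.
rewrite [RHS](reindex_inj rev_ord_inj) /=; apply: eq_bigr => k _.
have hk := ltn_ord k.
have ek : (r - (r - k.+1).+1)%N = k by rewrite /r; lia.
have ek2 : ((r - k.+1).+1)%N = (r - k)%N by rewrite /r; lia.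
rewrite ek ek2.
have c1 : ((n - 2*k - 2)%:R : R) = n%:R - 2 * k%:R - 2.
  rewrite natrB; last by lia.
  by rewrite natrB ?natrM //; lia.
have c2 : ((n - 2*k - 1)%:R : R) = n%:R - 2 * k%:R - 1.
  rewrite natrB; last by lia.
  by rewrite natrB ?natrM //; lia.
have hN : (2 * k%:R + 2 <= n%:R :> R).
  have h : (2 * k + 2 <= n)%N by rewrite /r in hk; lia.
  by rewrite -(ler_nat R) natrD natrM in h.
rewrite c1 c2 natrB; last by apply: ltnW.
by apply: factor_eq.
Qed.
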